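(* Let $N\ge d$ and let $K\subset\mathbb{R}^d$ be a compact convex polytope of dimension $d$ with codimension-one faces $F_0,\dots,F_N$. Suppose every collection of $d$ normal vectors of the hyperplanes containing these faces is linearly independent. Let $S\supseteq K$ be a $d$-dimensional simplex each of whose codimension-one faces contains a face of $K$. Then for every nonzero vector $b\in\mathbb{R}^d$, the translate $b+K$ contains points not in $S$.
   Context: The simplices $S$ considered are those appearing in a representation $K=\bigcap_j S_j$ of $K$ as an intersection of $d$-dimensional simplices each of whose faces contains a face of $K$. *)

(* Defs.v *)
From HB Require Import structures.
From mathcomp Require Import all_boot all_order all_algebra.
From mathcomp Require Import reals.
Set Implicit Arguments. Unset Strict Implicit. Unset Printing Implicit Defensive.
Import Order.TTheory GRing.Theory Num.Theory.
Local Open Scope ring_scope.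

Section Defs.
Variables (R : realType) (d : nat).
Notation vec := 'rV[R]_d.

Definition dotp (u v : vec) : R := (u *m v^T) 0 0.

Definition affdim_ge (F : vec -> Prop) (k : nat) : Prop :=
  exists p : 'I_k.+1 -> vec, (forall i, F (p i)) /\
    row_free (\matrix_(i < k) (p (lift ord0 i) - p ord0)).

Definition affdim (F : vec -> Prop) (k : nat) : Prop :=
  affdim_ge F k /\ ~ affdim_ge F k.+1.

Definition hpoly (m : nat) (a : 'I_m -> vec) (c : 'I_m -> R) (x : vec) : Prop :=
  forall i, dotp (a i) x <= c i.

Definition hface (m : nat) (a : 'I_m -> vec) (c : 'I_m -> R) (i : 'I_m)
  (x : vec) : Prop :=
  hpoly a c x /\ dotp (a i) x = c i.

Definition bounded (K : vec -> Prop) : Prop :=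
  exists M : R, forall x, K x -> forall j, `|x 0 j| <= M.

Definition conv_hull (m : nat) (v : 'I_m -> vec) (P : 'I_m -> bool) (x : vec)
  : Prop :=
  exists l : 'I_m -> R, (forall j, 0 <= l j) /\ (forall j, ~~ P j -> l j = 0) /\
    \sum_(j < m) l j = 1 /\ x = \sum_(j < m) l j *: v j.

Definition aff_indep (v : 'I_d.+1 -> vec) : Prop :=
  row_free (\matrix_(i < d) (v (lift ord0 i) - v ord0)).

Definition simplex (v : 'I_d.+1 -> vec) : vec -> Prop := conv_hull v predT.

Definition simplex_facet (v : 'I_d.+1 -> vec) (j : 'I_d.+1) : vec -> Prop :=
  conv_hull v (predC1 j).

End Defs.

(* Main.v *)
Require Import Defs.
From HB Require Import structures.
From mathcomp Require Import all_boot all_order all_algebra.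
From mathcomp Require Import reals.
From Stdlib Require Import Classical.
Import Order.TTheory GRing.Theory Num.Theory.
Local Open Scope ring_scope.

Lemma aff_uniq (R : realType) d (v : 'I_d.+1 -> 'rV[R]_d) (g : 'I_d.+1 -> R) :
  aff_indep v -> \sum_k g k = 0 -> \sum_k g k *: v k = 0 -> forall k, g k = 0.
Proof.
move=> Hv Hs Hv0.
have e : \sum_k g k *: (v k - v ord0) = 0.
  by under eq_bigr do rewrite scalerBr; rewrite sumrB -scaler_suml Hs scale0r subr0.
rewrite big_ord_recl subrr scaler0 add0r in e.
set M := \matrix_(i < d) (v (lift ord0 i) - v ord0).
set w := \row_(i < d) g (lift ord0 i).
have ew : w *m M = 0 *m M.
  rewrite mul0mx mulmx_sum_row -{2}e; apply: eq_bigr => i _.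
  by rewrite rowK mxE.
have w0 := row_free_inj Hv ew.
have gl : forall i, g (lift ord0 i) = 0.
  by move=> i; have := congr1 (fun m : 'rV[R]_d => m 0 i) w0; rewrite /= !mxE.
have g0 : g ord0 = 0.
  by move: Hs; rewrite big_ord_recl big1 ?addr0 // => i _; rewrite gl.
by move=> k; case: (unliftP ord0 k) => [j ->|->].
Qed.

Theorem lemma3p9 (R : realType) (d N : nat) (a : 'I_N.+1 -> 'rV[R]_d)
  (c : 'I_N.+1 -> R) (v : 'I_d.+1 -> 'rV[R]_d) :
  (0 < d)%N -> (d <= N)%N ->
  (* K := hpoly a c is a compact d-dimensional polytope *)
  bounded (hpoly a c) -> affdim (hpoly a c) d ->
  (* its codimension-one faces are exactly F_i := hface a c i, i = 0..N *)
  (forall i, affdim (hface a c i) d.-1) ->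
  (forall i j, i != j -> hface a c i <> hface a c j) ->
  (* any d of the normals a i are linearly independent *)
  (forall f : 'I_d -> 'I_N.+1, injective f ->
     row_free (\matrix_(k < d) a (f k))) ->
  (* S := simplex v is a d-simplex containing K *)
  aff_indep v ->
  (forall x, hpoly a c x -> simplex v x) ->
  (* each codimension-one face of S contains a codimension-one face of K *)
  (forall j, exists i, forall x, hface a c i x -> simplex_facet v j x) ->
  forall b : 'rV[R]_d, b != 0 ->
    exists x, hpoly a c x /\ ~ simplex v (b + x).
Proof.
move=> _ _ _ _ Hf _ _ Hv _ Hfac b bn0.
apply: NNPP => Hno.
have Hall : forall j, exists l m : 'I_d.+1 -> R,
    [/\ l j = 0, (forall k, 0 <= m k), \sum_k l k = 1, \sum_k m k = 1 &
        b + \sum_k l k *: v k = \sum_k m k *: v k].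
  move=> j; have [i Hi] := Hfac j.
  have [[p [Hp _]] _] := Hf i.
  have [l [_ [l0 [l1 ex]]]] := Hi _ (Hp ord0).
  have : simplex v (b + p ord0).
    apply: NNPP => Hs; apply: Hno; exists (p ord0); split => //.
    by case: (Hp ord0).
  case=> m [m0 [_ [m1 em]]]; exists l, m; split => //.
    by apply: l0; rewrite /= eqxx.
  by rewrite -ex.
have [l0 [m0 [_ _ l01 m01 e0]]] := Hall ord0.
set mu := fun k => m0 k - l0 k.
have emu : forall j, mu j = m0 j - l0 j by [].
have bE : b = \sum_k mu k *: v k.
  rewrite /mu; under eq_bigr do rewrite scalerBl; rewrite sumrB -e0; by rewrite addrK.
have mu_ge0 : forall j, 0 <= mu j.
  move=> j; have [l [m [lj mge ls ms e]]] := Hall j.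
  have s1 : \sum_k (m k - l k - mu k) = 0.
    by rewrite sumrB (sumrB _ _ m l) ls ms /mu (sumrB _ _ m0 l0) m01 l01 !subrr.
  have s2 : \sum_k (m k - l k - mu k) *: v k = 0.
    under eq_bigr do rewrite scalerBl scalerBl.
    by rewrite sumrB sumrB -e -bE addrK subrr.
  have H0 := @aff_uniq R d v (fun k => (m k - l k) - mu k) Hv s1 s2 j.
  by move/eqP: H0; rewrite subr_eq0 => /eqP <-; rewrite lj subr0.
have smu : \sum_k mu k = 0 by rewrite /mu (sumrB _ _ m0 l0) m01 l01 subrr.
have mu0 := psumr_eq0P (fun i _ => mu_ge0 i) smu.
move/eqP: bn0; apply; rewrite bE big1 // => k _.
by rewrite mu0 // scale0r.
Qed.
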